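(* There are absolute constants $c,C>0$ such that the following holds. Let $G$ be a finite abelian group, let $A\subset G$ be nonempty, and let $\alpha=|A|/|G|$. Then there exist a set of characters $S\subset\hat G$ with $|S|\le C\log(2/\alpha)$, a radius $\rho\ge c/\log(2/\alpha)$, and a positive integer $k\le C\log(2/\alpha)$ such that the Bohr set $B(S,\rho)$ satisfies $B(S,\rho)\subset kA-kA$.
   Context: $\hat G$ is the group of homomorphisms $G\to S^1=\{z\in\mathbb{C}:|z|=1\}$. For $S\subset\hat G$ and $\rho>0$, $B(S,\rho)=\{x\in G:|\gamma(x)-1|\le\rho\text{ for all }\gamma\in S\}$; $|S|$ is its rank and $\rho$ its radius. $kA-kA=\{a_1+\dots+a_k-b_1-\dots-b_k:a_i,b_i\in A\}$. $\log$ is natural. *)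

(* Defs.v *)
From HB Require Import structures.
From mathcomp Require Import all_boot all_algebra.
From mathcomp Require Import reals Rstruct complex exp.
Set Implicit Arguments. Unset Strict Implicit. Unset Printing Implicit Defensive.
Import GRing.Theory Num.Theory.
Local Open Scope ring_scope.

Notation RR := Rdefinitions.R.
Notation CC := (complex.complex RR).

Definition is_character (G : finZmodType) (gamma : G -> CC) : Prop :=
  (forall x, `|gamma x| = 1) /\ (forall x y, gamma (x + y) = gamma x * gamma y).

Definition bohr (G : finZmodType) (S : seq (G -> CC)) (rho : RR) (x : G) : Prop :=
  forall gamma, List.In gamma S -> `|gamma x - 1| <= (rho%:C)%C.

Definition iter_diff (G : finZmodType) (k : nat) (A : {set G}) (x : G) : Prop :=
  exists a b : 'I_k -> G,
     (forall i, a i \in A) /\ (forall i, b i \in A) /\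
     (x = \sum_(i < k) a i - \sum_(i < k) b i).

(* Main.v *)
Require Import Defs.
From mathcomp Require Import all_boot all_algebra.
From mathcomp Require Import all_fingroup all_solvable all_field all_character.
From mathcomp Require Import reals Rstruct complex exp.
From mathcomp Require Import interval_inference sequences convex.
From mathcomp Require Import ring lra zify.
From Stdlib Require Import Classical.
Import order.Order.TTheory GRing.Theory Num.Theory.
Local Open Scope ring_scope.

Unset Implicit Arguments. Set Strict Implicit.

Section Sep.
Variable G : finZmodType.
Local Notation p := (Zp_trunc #|G|).

Lemma cardG_dvd_p : (#|G| %| p.+2)%N.
Proof.
case: (ltnP 1 #|G|) => h; first by rewrite Zp_cast.
have : (0 < #|G|)%N by apply/card_gt0P; exists 0.
by case: #|G| h => [|[|]].
Qed.

Lemma abelG : abelian [set: G].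
Proof. by apply/centsP => x _ y _; apply: addrC. Qed.

Lemma sep_hom (y : G) : y != 0 ->
  exists f : G -> 'I_p.+2, (forall u v, f (u + v) = (f u + f v)%R) /\ f y != 0%R.
Proof.
move=> y0.
have [z prim_z] := C_prim_root_exists (ltn0Sn p.+1).
have : y \notin \bigcap_i cfker 'chi[[set: G]]_i.
  by rewrite TI_cfker_irr inE.
move=> ny.
have [i chy] : exists i, y \notin cfker 'chi[[set: G]]_i.
  case: (boolP [forall i, y \in cfker 'chi[[set: G]]_i]).
    move/forallP => h; case/negP: ny; apply/bigcapP => j _; apply: h.
  by move/forallPn.
rewrite cfkerEirr inE in chy.
have lin : 'chi[[set: G]]_i \is a linear_char by apply/char_abelianP/abelG.
rewrite lin_char1 // in chy.
have hM : forall x : G, 'chi[[set: G]]_i x ^+ p.+2 = 1.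
  move=> x; have xG : x \in [set: G] by rewrite inE.
  have := lin_char_unity_root lin xG.
  have /dvdnP[q ->] : (#[x]%g %| p.+2)%N.
    by apply: dvdn_trans cardG_dvd_p; have := order_dvdG xG; rewrite cardsT.
  by rewrite mulnC exprM => ->; rewrite expr1n.
pose f x := sval (prim_rootP prim_z (hM x)).
have fE x : 'chi[[set: G]]_i x = z ^+ f x by rewrite /f; case: prim_rootP.
exists f; split.
  move=> u v; apply: val_inj => /=.
  have : z ^+ f (u + v) == z ^+ (f u + f v)%N.
    rewrite -!fE exprD -!fE.
    have := lin_charM lin (_ : u \in [set: G]) (_ : v \in [set: G]).
    by rewrite !inE => /(_ isT isT) <-.
  rewrite (eq_prim_root_expr prim_z) => /eqP.
  by rewrite modn_small // ?ltn_ord.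
apply: contra chy => /eqP f0; rewrite fE f0 expr0.
done.
Qed.
End Sep.

Unset Implicit Arguments. Set Strict Implicit.

Section Chars.
Variable G : finZmodType.
Implicit Types (g h : G -> CC).

Lemma ch_neq0 g x : is_character g -> g x != 0.
Proof. by case=> h _; rewrite -normr_eq0 h oner_eq0. Qed.

Lemma ch0 g : is_character g -> g 0 = 1.
Proof.
move=> hg; have := hg.2 0 0; rewrite addr0 => e.
have nz := @ch_neq0 g 0 hg.
by apply: (mulfI nz); rewrite -e mulr1.
Qed.

Lemma ch_inv g x : is_character g -> g (- x) = (g x)^-1.
Proof.
move=> hg; have := hg.2 x (- x); rewrite subrr ch0 // => e.
by apply: (mulfI (@ch_neq0 g x hg)); rewrite -e mulfV // ch_neq0.
Qed.

Lemma ch_conj g x : is_character g -> (g x)^* = (g x)^-1.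
Proof.
move=> hg; have n1 := hg.1 x.
by rewrite invC_norm n1 expr1n invr1 mul1r.
Qed.

Lemma ch_N g x : is_character g -> g (- x) = (g x)^*.
Proof. by move=> hg; rewrite ch_conj // ch_inv. Qed.

Lemma ch_sum0 g : is_character g -> (exists x0, g x0 != 1) -> \sum_x g x = 0.
Proof.
move=> hg [x0 hx0].
have e : \sum_x g x = g x0 * \sum_x g x.
  rewrite mulr_sumr (reindex_inj (addrI x0)) /=.
  by apply: eq_bigr => x _; rewrite hg.2.
apply/eqP; move/eqP: e; rewrite -subr_eq0 -{1}[\sum_x g x]mul1r -mulrBl mulf_eq0.
by rewrite subr_eq0 eq_sym (negPf hx0).
Qed.

Lemma ch_mul g h : is_character g -> is_character h -> is_character (fun x => g x * h x).
Proof.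
move=> hg hh; split=> [x|x y]; first by rewrite normrM hg.1 hh.1 mulr1.
by by rewrite hg.2 hh.2 mulrACA.
Qed.

Lemma ch_cj g : is_character g -> is_character (fun x => (g x)^*).
Proof.
move=> hg; split=> [x|x y]; first by rewrite norm_conjC hg.1.
by rewrite hg.2 rmorphM.
Qed.

Lemma ch_one : is_character (fun _ : G => 1 : CC).
Proof. by split=> [x|x y]; rewrite ?normr1 ?mulr1. Qed.

Lemma ch_big g (I : Type) (r : seq I) (P : pred I) (F : I -> G) : is_character g ->
  g (\sum_(i <- r | P i) F i) = \prod_(i <- r | P i) g (F i).
Proof.
move=> hg; apply: (big_morph g) => [x y|]; [exact: hg.2 | exact: ch0].
Qed.
End Chars.
Arguments ch_neq0 {G g} x _.
Arguments ch0 {G g} _.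
Arguments ch_inv {G g} x _.
Arguments ch_conj {G g} x _.
Arguments ch_N {G g} x _.
Arguments ch_sum0 {G g} _ _.
Arguments ch_mul {G g h} _ _.
Arguments ch_cj {G g} _.
Arguments ch_big {G g I} r P F _.

Set Implicit Arguments. Unset Strict Implicit.



Lemma CC_prim_root n : (0 < n)%N -> {z : CC | n.-primitive_root z}.
Proof.
pose p : {poly CC} := 'X^n - 1; have [r Dp] := closed_field_poly_normal p.
move=> n_gt0; apply/sigW; rewrite (monicP _) ?monicXnsubC // scale1r in Dp.
have rn1: all n.-unity_root r by apply/allP=> z; rewrite -root_prod_XsubC -Dp.
have sz_r: (n < (size r).+1)%N.
  by rewrite -(size_prod_XsubC r id) -Dp size_XnsubC.
have [|z] := hasP (has_prim_root n_gt0 rn1 _ sz_r); last by exists z.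
by rewrite -separable_prod_XsubC -Dp separable_Xn_sub_1 // pnatr_eq0 -lt0n.
Qed.

Section Dual.
Variable G : finZmodType.
Local Notation Mp := (Zp_trunc #|G|).+2.
Variable w : CC.
Hypothesis pw : Mp.-primitive_root w.

Lemma norm_w : `|w| = 1.
Proof.
have : `|w| ^+ Mp = 1 by rewrite -normrX (prim_expr_order pw) normr1.
by move/eqP; rewrite pexpr_eq1 // => /eqP.
Qed.

Definition chr (f : {ffun G -> 'I_Mp}) : G -> CC := fun x => w ^+ (f x).
Definition ishom (f : {ffun G -> 'I_Mp}) :=
  [forall x, [forall y, f (x + y) == f x + f y]].

Lemma wexpE (i j : 'I_Mp) : w ^+ (i + j)%R = w ^+ i * w ^+ j.
Proof. by rewrite -exprD -(prim_expr_mod pw (i + j)%N). Qed.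

Lemma w_inj (i j : 'I_Mp) : (w ^+ i == w ^+ j) = (i == j).
Proof. by rewrite (eq_prim_root_expr pw) !modn_small. Qed.

Lemma ishomP (f : {ffun G -> 'I_Mp}) : reflect (forall x y, f (x + y) = f x + f y) (ishom f).
Proof.
apply: (iffP idP) => [/forallP h x y|h].
  by have /forallP/(_ y)/eqP := h x.
by apply/forallP => x; apply/forallP => y; rewrite h.
Qed.

Lemma hom0 (f : {ffun G -> 'I_Mp}) : ishom f -> f 0 = 0.
Proof.
move/ishomP => h; have := h 0 0; rewrite addr0 => e.
by apply: (addrI (f 0)); rewrite -e addr0.
Qed.

Lemma chr_char (f : {ffun G -> 'I_Mp}) : ishom f -> is_character (chr f).
Proof.
move=> /ishomP h; split=> [x|x y]; first by rewrite normrX norm_w expr1n.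
by rewrite /chr h wexpE.
Qed.
Arguments chr_char {f} _.

Lemma orth y : \sum_(f | ishom f) chr f y = (#|[pred f | ishom f]| * (y == 0))%:R.
Proof.
have [->|y0] := eqVneq y 0.
  rewrite muln1 (eq_bigr (fun _ => 1)) ?sumr_const //.
  by move=> f hf; rewrite /chr hom0 // expr0.
have [g [hg gy]] := @sep_hom G y y0.
pose f0 : {ffun G -> 'I_Mp} := finfun g.
have f0h : ishom f0 by apply/ishomP => u v; rewrite !ffunE hg.
have e : \sum_(f | ishom f) chr f y = w ^+ (f0 y) * \sum_(f | ishom f) chr f y.
  rewrite mulr_sumr (reindex_inj (addIr f0)) /=.
  apply: eq_big => f.
    apply/idP/idP => /ishomP h; apply/ishomP => u v.
      by have := h u v; rewrite !ffunE hg addrACA => /addIr.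
    by rewrite !ffunE h hg addrACA.
  by move=> _; rewrite /chr ffunE wexpE mulrC.
apply/eqP; move/eqP: e; rewrite muln0 -subr_eq0 -{1}[\sum_(f | _) _]mul1r -mulrBl mulf_eq0.
rewrite subr_eq0 eq_sym -(expr0 w) (w_inj _ (0 : 'I_Mp)) ffunE.
by rewrite (negPf gy).
Qed.

Lemma chr_sub (f : {ffun G -> 'I_Mp}) x y : ishom f ->
  chr f x * (chr f y)^* = chr f (x - y).
Proof. by move=> hf; rewrite (chr_char hf).2 (ch_N _ (chr_char hf)). Qed.

Lemma orth2 (f g : {ffun G -> 'I_Mp}) : ishom f -> ishom g ->
  \sum_x chr f x * (chr g x)^* = (#|G| * (f == g))%:R.
Proof.
move=> hf hg; have [<-|fg] := eqVneq f g.
  rewrite muln1 (eq_bigr (fun _ => 1)) ?sumr_const ?card_ord //.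
  by move=> x _; rewrite chr_sub // subrr (ch0 (chr_char hf)).
rewrite muln0; apply: ch_sum0; first exact: ch_mul (chr_char hf) (ch_cj (chr_char hg)).
have [x0 hx0] : exists x0, f x0 != g x0.
  apply/existsP; apply: contraT; rewrite negb_exists => /forallP h.
  by case/eqP: fg; apply/ffunP => x; have := h x; rewrite negbK => /eqP.
exists x0; apply: contra hx0 => /eqP e.
rewrite -w_inj; apply/eqP.
have nz : (chr g x0)^* != 0 by rewrite conjC_eq0 (ch_neq0 _ (chr_char hg)).
apply: (mulIf nz); rewrite e -normCK (chr_char hg).1 expr1n //.
Qed.

Lemma card_hom : #|[pred f | ishom f]| = #|G|.
Proof.
set m := #|[pred f | ishom f]|; set n := #|G|.
have m0 : (0 < m)%N.
  apply/card_gt0P; exists 0; rewrite inE; apply/ishomP => x y; rewrite !ffunE addr0 //.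
have n0 : (0 < n)%N by apply/card_gt0P; exists 0.
pose a f g x := chr f x * (chr g x)^*.
have E1 : \sum_(f | ishom f) \sum_(g | ishom g) (\sum_x a f g x) * (\sum_x a f g x)^*
          = (m * n ^ 2)%:R.
  rewrite (eq_bigr (fun _ => (n ^ 2)%:R)); last first.
    move=> f hf; rewrite (bigD1 f) //= [X in _ + X]big1 ?addr0; last first.
      move=> g /andP[hg gf].
      by rewrite /a /= orth2 // eq_sym (negPf gf) muln0 mul0r.
    by rewrite /a /= orth2 // eqxx muln1 conjC_nat natrX expr2.
  by rewrite sumr_const -mulrnA mulnC.
have E2 : \sum_(f | ishom f) \sum_(g | ishom g) (\sum_x a f g x) * (\sum_x a f g x)^*
          = (n * m ^ 2)%:R.
  transitivity (\sum_x \sum_y (\sum_(f | ishom f) chr f (x - y)) *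
                               (\sum_(g | ishom g) chr g (y - x))).
    transitivity (\sum_(f | ishom f) \sum_(g | ishom g) \sum_x \sum_y
                    chr f (x - y) * chr g (y - x)).
      apply: eq_bigr => f hf; apply: eq_bigr => g hg.
      rewrite rmorph_sum big_distrlr /=; apply: eq_bigr => x _; apply: eq_bigr => y _.
      rewrite /a !rmorphM /= conjCK -(chr_sub x y hf) -(chr_sub y x hg).
      by rewrite mulrACA [(chr g x)^* * _]mulrC.
    transitivity (\sum_(f | ishom f) \sum_x \sum_y \sum_(g | ishom g)
                    chr f (x - y) * chr g (y - x)).
      apply: eq_bigr => f hf; rewrite exchange_big /=.
      by apply: eq_bigr => x _; rewrite exchange_big.
    rewrite exchange_big /=; apply: eq_bigr => x _.
    rewrite exchange_big /=; apply: eq_bigr => y _.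
    by rewrite big_distrlr.
  rewrite (eq_bigr (fun _ => (m ^ 2)%:R)); last first.
  move=> x _; rewrite (bigD1 x) //= [X in _ + X]big1 ?addr0; last first.
    by move=> y yx; rewrite orth subr_eq0 eq_sym (negPf yx) muln0 mul0r.
  by rewrite !orth !subrr eqxx muln1 natrX expr2.
  by rewrite sumr_const -mulrnA mulnC.
have : (m * n ^ 2)%:R = (n * m ^ 2)%:R :> CC by rewrite -E1 E2.
move/eqP; rewrite eqr_nat => /eqP e.
have e2 : ((m * n) * n = (m * n) * m)%N.
  by move: e; rewrite !expnS expn0 !muln1 !mulnA => ->; rewrite [(n * m)%N]mulnC.
apply/eqP; rewrite -(eqn_pmul2l (_ : 0 < m * n)%N) ?muln_gt0 ?m0 ?n0 //.
by rewrite e2.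
Qed.
End Dual.

Unset Implicit Arguments. Set Strict Implicit.



Section Fourier.
Variable G : finZmodType.
Local Notation Mp := (Zp_trunc #|G|).+2.
Variable w : CC.
Hypothesis pw : Mp.-primitive_root w.
Variable A : {set G}.
Local Notation chr := (@chr G w).

Definition Fh (f : {ffun G -> 'I_Mp}) : CC := \sum_(a in A) chr f a.

Lemma parseval : \sum_(f | ishom f) Fh f * (Fh f)^* = (#|G| * #|A|)%:R.
Proof.
transitivity (\sum_(f | ishom f) \sum_(a in A) \sum_(b in A) chr f (a - b)).
  apply: eq_bigr => f hf; rewrite /Fh rmorph_sum big_distrlr /=.
  by apply: eq_bigr => a _; apply: eq_bigr => b _; rewrite (chr_sub pw).
rewrite exchange_big /=.
rewrite (eq_bigr (fun _ => (#|G|)%:R)).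
  by rewrite sumr_const -mulrnA mulnC.
move=> a aA; rewrite exchange_big /= (bigD1 a) //= [X in _ + X]big1 ?addr0.
  by rewrite (orth pw) subrr eqxx muln1 (card_hom pw).
by move=> b /andP[_ ba]; rewrite (orth pw) subr_eq0 eq_sym (negPf ba) muln0.
Qed.

Lemma Fh_pow (f : {ffun G -> 'I_Mp}) k : ishom f ->
  Fh f ^+ k = \sum_(p in ffun_on (mem A)) chr f (\sum_(i < k) p i).
Proof.
move=> hf; transitivity (\prod_(i < k) Fh f); first by rewrite prodr_const card_ord.
rewrite /Fh bigA_distr_big; apply: eq_bigr => p _.
by rewrite (ch_big _ _ _ (chr_char pw hf)).
Qed.

Lemma rep_zero k x : ~ iter_diff k A x ->
  \sum_(f | ishom f) Fh f ^+ k * (Fh f ^+ k)^* * (chr f x)^* = 0.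
Proof.
move=> nrep.
transitivity (\sum_(f | ishom f) \sum_(p in ffun_on (mem A)) \sum_(q in ffun_on (mem A))
   chr f ((\sum_(i < k) p i - \sum_(i < k) q i) - x)).
  apply: eq_bigr => f hf; rewrite Fh_pow // rmorph_sum big_distrlr /= mulr_suml.
  apply: eq_bigr => p _; rewrite mulr_suml; apply: eq_bigr => q _.
  by rewrite !(chr_sub pw).
rewrite exchange_big big1 // => p pA; rewrite exchange_big big1 // => q qA.
rewrite (orth pw) subr_eq0.
case: eqP => [e|]; last by rewrite muln0.
case: nrep; exists p, q; split; first by move=> i; apply: (ffun_onP pA).
by split; [move=> i; apply: (ffun_onP qA) | rewrite e].
Qed.

End Fourier.

Set Implicit Arguments. Unset Strict Implicit.



Lemma InP (T : eqType) (x : T) s : List.In x s <-> x \in s.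
Proof.
elim: s => [|y s IH] //=; rewrite inE; split.
  by case=> [->|/IH ->]; rewrite ?eqxx ?orbT.
by case/orP => [/eqP->|/IH]; [left | right].
Qed.

Section Diss.
Variable G : finZmodType.
Implicit Types (g h : G -> CC) (lam : seq (G -> CC)) (e : seq 'I_3).

Definition pw3 (c : 'I_3) (z : CC) : CC :=
  match val c with 0 => 1 | 1 => z | _ => z^* end.

Fixpoint psi lam e (x : G) : CC :=
  match lam, e with
  | l :: lam', c :: e' => pw3 c (l x) * psi lam' e' x
  | _, _ => 1
  end.

Definition allch lam := forall l, List.In l lam -> is_character l.

Definition dissoc lam := forall e, size e = size lam ->
  has (fun c : 'I_3 => val c != 0%N) e -> exists x, psi lam e x != 1.

Definition inspan lam g := exists e, size e = size lam /\ forall x, g x = psi lam e x.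

Lemma pw3_char c g : is_character g -> is_character (fun x => pw3 c (g x)).
Proof.
move=> hg; rewrite /pw3; case: c => [[|[|k]] hk] /=; first exact: ch_one.
  by [].
exact: ch_cj.
Qed.

Lemma psi_char lam e : allch lam -> is_character (psi lam e).
Proof.
elim: lam e => [|l lam IH] [|c e] hl /=; try exact: ch_one.
apply: (ch_mul (g := fun x => pw3 c (l x))).
  by apply: pw3_char; apply: hl; left.
by apply: IH => l' hl'; apply: hl; right.
Qed.

Definition o1 : 'I_3 := @Ordinal 3 1 isT.
Definition o2 : 'I_3 := @Ordinal 3 2 isT.
Definition swap3 (c : 'I_3) : 'I_3 :=
  match val c with 0 => c | 1 => o2 | _ => o1 end.

Lemma pw3_swap c z : pw3 (swap3 c) z = (pw3 c z)^*.
Proof.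
by rewrite /swap3 /pw3; case: c => [[|[|[|k]]] hk] //=; rewrite ?conjC1 ?conjCK.
Qed.

Lemma psi_swap lam e x : psi lam (map swap3 e) x = (psi lam e x)^*.
Proof.
elim: lam e => [|l lam IH] [|c e] /=; rewrite ?conjC1 //.
by rewrite rmorphM /= pw3_swap IH.
Qed.

Lemma psi_cons0 l lam e x : psi (l :: lam) (ord0 :: e) x = psi lam e x.
Proof. by rewrite /= /pw3 /= mul1r. Qed.

Lemma psi_zero lam x : psi lam (nseq (size lam) ord0) x = 1.
Proof. by elim: lam => [|l lam IH] //=; rewrite /pw3 /= mul1r. Qed.

Lemma inspan_cons lam l g : inspan lam g -> inspan (l :: lam) g.
Proof.
case=> e [se he]; exists (ord0 :: e); split; first by rewrite /= se.
by move=> x; rewrite psi_cons0.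
Qed.

Lemma inspan_self lam l : inspan (l :: lam) l.
Proof.
exists (o1 :: nseq (size lam) ord0); split; first by rewrite /= size_nseq.
by move=> x; rewrite /= psi_zero mulr1.
Qed.

Lemma dissoc_tail l lam : dissoc (l :: lam) -> dissoc lam.
Proof.
move=> d e se he.
have h1 : size (ord0 :: e) = size (l :: lam) by rewrite /= se.
have h2 : has (fun c : 'I_3 => val c != 0%N) (ord0 :: e) by rewrite /= he.
have [x hx] := d _ h1 h2.
by exists x; rewrite -(psi_cons0 l).
Qed.

Lemma dissoc_cons lam g : allch lam -> is_character g -> dissoc lam ->
  ~ inspan lam g -> dissoc (g :: lam).
Proof.
move=> hl hg d ns [|c e] //= [se]; rewrite /= => hce.
have pc := psi_char e hl.
case: (boolP [exists x, pw3 c (g x) * psi lam e x != 1]).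
  by case/existsP => x hx; exists x.
rewrite negb_exists => /forallP all1.
have all1' x : pw3 c (g x) * psi lam e x = 1 by have := all1 x; rewrite negbK => /eqP.
exfalso; clear all1; move: hce all1'; rewrite /pw3; case: c => [[|[|[|k]]] hk] //= hce all1'.
- have [x hx] := d e se hce; move: (all1' x); rewrite mul1r => e1.
  by rewrite e1 eqxx in hx.
- apply: ns; exists (map swap3 e); split; first by rewrite size_map.
  move=> x; rewrite psi_swap.
  have nz : psi lam e x != 0 by apply: (ch_neq0 x pc).
  apply: (mulIf nz); rewrite all1' mulrC -normCK (pc.1 x) expr1n //.
- apply: ns; exists e; split => // x.
  have nz : psi lam e x != 0 by apply: (ch_neq0 x pc).
  have : (g x)^* = (psi lam e x)^*.
    apply: (mulIf nz); rewrite all1' mulrC -normCK (pc.1 x) expr1n //.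
  by move/(congr1 (fun z => z^*)); rewrite !conjCK.
Qed.

Lemma greedy (T : eqType) (sp : seq T) (chs : T -> G -> CC) :
  (forall t, t \in sp -> is_character (chs t)) ->
  exists lam : seq T, {subset lam <= sp} /\ dissoc (map chs lam) /\
     forall t, t \in sp -> inspan (map chs lam) (chs t).
Proof.
elim: sp => [|t sp IH] hc.
  by exists [::]; split => //; split => // e; case: e.
have hc' : forall t', t' \in sp -> is_character (chs t').
  by move=> t' h; apply: hc; rewrite inE h orbT.
have [lam [sub [d sp_ok]]] := IH hc'.
have allc : allch (map chs lam).
  move=> l /List.in_map_iff [t' [<- ht']]; apply: hc; rewrite inE; apply/orP; right.
  by apply: sub; apply/InP.
case: (classic (inspan (map chs lam) (chs t))) => hin.
  exists lam; split; first by move=> t' /sub ht'; rewrite inE ht' orbT.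
  split=> // t'; rewrite inE => /orP[/eqP->|]; [exact: hin | exact: sp_ok].
exists (t :: lam); split.
  by move=> t'; rewrite !inE => /orP[->|/sub ->]; rewrite ?orbT.
split.
  by apply: dissoc_cons => //; apply: hc; rewrite inE eqxx.
move=> t'; rewrite inE => /orP[/eqP->|ht']; first exact: inspan_self.
exact/inspan_cons/sp_ok.
Qed.


Lemma norm_mul1 (z p : CC) : `|z| = 1 -> `|z * p - 1| <= `|z - 1| + `|p - 1|.
Proof.
move=> hz; have -> : z * p - 1 = z * (p - 1) + (z - 1) by ring.
by apply: le_trans (ler_normD _ _) _; rewrite normrM hz mul1r addrC.
Qed.

Lemma pw3_near c (z : CC) : `|pw3 c z - 1| <= `|z - 1|.
Proof.
rewrite /pw3; case: c => [[|[|k]] hk] //=; first by rewrite subrr normr0.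
by rewrite -conjC1 -rmorphB norm_conjC conjC1.
Qed.

Lemma psi_near lam e x (r : CC) : allch lam ->
  (forall l, List.In l lam -> `|l x - 1| <= r) ->
  `|psi lam e x - 1| <= (size lam)%:R * r.
Proof.
elim: lam e => [|l lam IH] [|c e] hl hr /=; rewrite ?subrr ?normr0 ?mul0r //.
  by rewrite mulr_ge0 // (le_trans _ (hr l _)) //; left.
have hl' : allch lam by move=> l' h; apply: hl; right.
have hr' : forall l', List.In l' lam -> `|l' x - 1| <= r by move=> l' h; apply: hr; right.
have c1 : `|pw3 c (l x)| = 1 by apply: (pw3_char c (hl l (or_introl erefl))).1.
apply: le_trans (norm_mul1 _ c1) _.
rewrite -addn1 natrD mulrDl mul1r addrC lerD //.
  exact: IH.
by apply: le_trans (pw3_near _ _) _; apply: hr; left.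
Qed.
End Diss.

Set Implicit Arguments. Unset Strict Implicit.



Lemma realC (x : CC) : 0 <= x -> x = (complex.Re x)%:C%C.
Proof. by case: x => a b; rewrite complex.lecE /= => /andP[/eqP -> _]. Qed.

Lemma ReJ (z : CC) : (complex.Re z)%:C%C = (z + z^*) / 2.
Proof. exact: complex.ReJ_add. Qed.

Section Chang.
Variable G : finZmodType.
Variable A : {set G}.
Implicit Types (l g : G -> CC) (lam : seq (G -> CC)).

Definition FA l : CC := \sum_(a in A) l a.
Definition cf l : CC := (FA l)^* / `|FA l|.
Definition u l x : RR := complex.Re (cf l * l x).
Definition beta : RR := 3 / 5.
Definition Q lam x : RR := \prod_(l <- lam) (1 + beta * u l x).

Lemma factorC l x : (1 + beta * u l x)%:C%C =
  1 + (beta / 2)%:C%C * (cf l * l x) + (beta / 2)%:C%C * ((cf l)^* * (l x)^*).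
Proof.
rewrite rmorphD rmorph1 rmorphM /= /u ReJ.
have -> : (beta / 2)%:C%C = beta%:C%C / 2.
  by rewrite rmorphM /= rmorphV ?unitfE ?pnatr_eq0 //= rmorph_nat.
rewrite [(cf l * l x)^*]rmorphM /=; ring.
Qed.

Lemma riesz_gen lam (chi : G -> CC) : allch lam -> is_character chi ->
  (forall e, size e = size lam -> exists x, chi x * psi lam e x != 1) ->
  \sum_x chi x * (Q lam x)%:C%C = 0.
Proof.
elim: lam chi => [|l lam IH] chi hl hc hyp.
  rewrite (eq_bigr chi) ?(ch_sum0 hc) //.
    by have [x hx] := hyp [::] erefl; exists x; rewrite /= mulr1 in hx.
  by move=> x _; rewrite /Q big_nil mulr1.
have hl' : allch lam by move=> l' h; apply: hl; right.
have cl : is_character l by apply: hl; left.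
pose b := (beta / 2)%:C%C.
transitivity (\sum_x chi x * (Q lam x)%:C%C
   + b * cf l * \sum_x (chi x * l x) * (Q lam x)%:C%C
   + b * (cf l)^* * \sum_x (chi x * (l x)^*) * (Q lam x)%:C%C).
  rewrite !mulr_sumr -!big_split /=; apply: eq_bigr => x _.
  rewrite /Q big_cons rmorphM /= factorC -/b; ring.
have s1 : \sum_x chi x * (Q lam x)%:C%C = 0.
  apply: IH => // e se; have [x hx] := hyp (ord0 :: e) (ltac:(by rewrite /= se)).
  by exists x; rewrite /= /pw3 /= mul1r in hx.
have s2 : \sum_x (chi x * l x) * (Q lam x)%:C%C = 0.
  apply: (IH (fun x => chi x * l x)) => //; first exact: ch_mul.
  move=> e se; have [x hx] := hyp (o1 :: e) (ltac:(by rewrite /= se)).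
  by exists x; rewrite /= /pw3 /= mulrA in hx.
have s3 : \sum_x (chi x * (l x)^*) * (Q lam x)%:C%C = 0.
  apply: (IH (fun x => chi x * (l x)^*)) => //; first exact: ch_mul hc (ch_cj cl).
  move=> e se; have [x hx] := hyp (o2 :: e) (ltac:(by rewrite /= se)).
  by exists x; rewrite /= /pw3 /= mulrA in hx.
by rewrite s1 s2 s3 !mulr0 !addr0.
Qed.

Lemma riesz lam : allch lam -> dissoc lam -> \sum_x (Q lam x)%:C%C = #|G|%:R.
Proof.
elim: lam => [|l lam IH] hl hd.
  by rewrite (eq_bigr (fun _ => 1)) ?sumr_const // => x _; rewrite /Q big_nil.
have hl' : allch lam by move=> l' h; apply: hl; right.
have cl : is_character l by apply: hl; left.
pose b := (beta / 2)%:C%C.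
transitivity (\sum_x (Q lam x)%:C%C
   + b * cf l * \sum_x l x * (Q lam x)%:C%C
   + b * (cf l)^* * \sum_x (l x)^* * (Q lam x)%:C%C).
  rewrite !mulr_sumr -!big_split /=; apply: eq_bigr => x _.
  rewrite /Q big_cons rmorphM /= factorC -/b; ring.
rewrite IH //; last exact: dissoc_tail hd.
rewrite (riesz_gen hl' cl) ?mulr0 ?addr0.
  rewrite (riesz_gen hl' (ch_cj cl)) ?mulr0 ?addr0 //.
  move=> e se; have [x hx] := hd (o2 :: e) (ltac:(by rewrite /= se)) isT.
  by exists x.
move=> e se; have [x hx] := hd (o1 :: e) (ltac:(by rewrite /= se)) isT.
by exists x.
Qed.

Lemma exp_chord (t v : RR) : -1 <= v -> v <= 1 ->
  expR (t * v) <= (1 + v) / 2 * expR t + (1 - v) / 2 * expR (- t).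
Proof.
move=> h1 h2.
have p0 : 0 <= (1 + v) / 2 by lra.
have p1 : (1 + v) / 2 <= 1 by lra.
have := convex_expR (Itv01 p0 p1) t (- t).
rewrite !convRE /= /unstable.onem.
have -> : (1 - v) / 2 = 1 - (1 + v) / 2 by field.
have -> : (1 + v) / 2 * t + (1 - (1 + v) / 2) * - t = t * v by field.
done.
Qed.

Lemma jensen (z : G -> RR) : (0 < #|A|)%N ->
  #|A|%:R * expR ((\sum_(a in A) z a) / #|A|%:R) <= \sum_(a in A) expR (z a).
Proof.
move=> A0; set m := (\sum_(a in A) z a) / #|A|%:R.
have nA : #|A|%:R != 0 :> RR by rewrite pnatr_eq0 -lt0n.
apply: le_trans (_ : \sum_(a in A) expR m * (1 + (z a - m)) <= _).
  have sz : \sum_(a in A) z a = #|A|%:R * m by rewrite /m mulrC divfK.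
  have E : \sum_(a in A) (1 + (z a - m)) = #|A|%:R.
    rewrite big_split /= sumr_const big_split /= sumrN sumr_const sz.
    by rewrite -[m *+ _]mulr_natl subrr addr0.
  by rewrite -mulr_sumr E mulrC.
apply: ler_sum => a _; rewrite -{2}(subrK m (z a)) expRD mulrC ler_pM2r ?expR_gt0 //.
exact: expR_ge1Dx.
Qed.

Lemma realn (x : CC) : (complex.Re `|x|)%:C%C = `|x|.
Proof. by rewrite -realC. Qed.

Lemma cfFA l : cf l * FA l = `|FA l|.
Proof.
rewrite /cf mulrAC [(FA l)^* * _]mulrC -normCK.
have [->|nz] := eqVneq `|FA l| 0; first by rewrite expr2 !mul0r.
by rewrite expr2 mulfK.
Qed.

Lemma cf_norm l : FA l != 0 -> `|cf l| = 1.
Proof.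
move=> nz; rewrite /cf normrM normfV norm_conjC normr_id divff //.
by rewrite normr_eq0.
Qed.

Lemma u_bounds l x : is_character l -> FA l != 0 -> -1 <= u l x <= 1.
Proof.
move=> hl nz; set z := cf l * l x.
have hz : `|z| = 1 by rewrite normrM cf_norm // hl.1 mulr1.
have := complex.add_Re2_Im2 z; rewrite hz expr1n => e.
have e' : (complex.Re z) ^+ 2 + (complex.Im z) ^+ 2 = 1.
  by apply: complex.complexI; rewrite e.
rewrite /u -/z; apply/andP; split; nra.
Qed.

Lemma sum_u l : \sum_(a in A) u l a = complex.Re `|FA l|.
Proof.
by rewrite /u -raddf_sum /= -mulr_sumr cfFA.
Qed.

Definition hh lam x : RR := \sum_(l <- lam) u l x.

Lemma expR_ln2 : expR (ln (2 : RR)) = 2.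
Proof. by rewrite lnK // posrE. Qed.

Lemma Q_ge0 lam x : allch lam -> (forall l, List.In l lam -> FA l != 0) -> 0 <= Q lam x.
Proof.
move=> hl hn; rewrite /Q; elim: lam hl hn => [|l lam IH] hl hn; first by rewrite big_nil.
rewrite big_cons mulr_ge0 //.
  have /andP[h1 h2] := u_bounds x (hl l (or_introl erefl)) (hn l (or_introl erefl)).
  rewrite /beta; lra.
by apply: IH => l' h; [apply: hl | apply: hn]; right.
Qed.

Lemma exp_Q lam x : allch lam -> (forall l, List.In l lam -> FA l != 0) ->
  expR (ln 2 * hh lam x) <= (5/4) ^+ size lam * Q lam x.
Proof.
elim: lam => [|l lam IH] hl hn.
  by rewrite /hh /Q !big_nil mulr0 expR0 expr0 mulr1.
have hl' : allch lam by move=> l' h; apply: hl; right.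
have hn' : forall l', List.In l' lam -> FA l' != 0 by move=> l' h; apply: hn; right.
have /andP[h1 h2] := u_bounds x (hl l (or_introl erefl)) (hn l (or_introl erefl)).
rewrite /hh /Q !big_cons -/(hh lam x) -/(Q lam x) mulrDr expRD /=.
have -> : (5 / 4 : RR) ^+ (size lam).+1 * ((1 + beta * u l x) * Q lam x)
        = ((5 / 4) * (1 + beta * u l x)) * ((5/4) ^+ size lam * Q lam x).
  by rewrite exprS; ring.
apply: ler_pM; rewrite ?expR_ge0 ?IH //.
have := exp_chord (ln 2) h1 h2; rewrite expRN expR_ln2 /beta => h.
by apply: le_trans h _; lra.
Qed.

Lemma sumA_bound lam : (forall l, List.In l lam -> #|A|%:R <= 2 * `|FA l|) ->
  (size lam)%:R * #|A|%:R / 2 <= \sum_(l <- lam) \sum_(a in A) u l a.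
Proof.
elim: lam => [|l lam' IH] hsp; first by rewrite big_nil !mul0r.
rewrite big_cons /= -addn1 natrD mulrDl mulrDl mul1r addrC.
apply: lerD; last by apply: IH => l' h; apply: hsp; right.
rewrite sum_u; have := hsp l (or_introl erefl).
have e1 : (#|A|%:R : CC) = (#|A|%:R)%:C%C by rewrite rmorph_nat.
have e2 : (2 : CC) = (2 : RR)%:C%C by rewrite rmorph_nat.
rewrite -realn e1 e2 -rmorphM /= complex.lecR.
move=> h; lra.
Qed.

Lemma chang lam : allch lam -> dissoc lam -> (0 < #|A|)%N ->
  (forall l, List.In l lam -> #|A|%:R <= 2 * `|FA l|) ->
  (size lam)%:R * (ln (2 : RR) / 2 - ln (5 / 4)) <= ln (#|G|%:R : RR) - ln (#|A|%:R).
Proof.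
move=> hl hd A0 hsp.
set d := size lam; set t := ln (2 : RR).
have nA : (0 : RR) < #|A|%:R by rewrite ltr0n.
have nG : (0 : RR) < #|G|%:R by rewrite ltr0n; apply/card_gt0P; exists 0.
have hn : forall l, List.In l lam -> FA l != 0.
  move=> l h; have := hsp l h; apply: contraTneq => ->.
  by rewrite normr0 mulr0 lern0 -lt0n.
have sA : d%:R * #|A|%:R / 2 <= \sum_(a in A) hh lam a.
  by rewrite /hh exchange_big /=; apply: sumA_bound.
have j := jensen (fun a => t * hh lam a) A0.
have t0 : 0 < t by rewrite /t ln_gt0 // ltr1n.
have b : #|A|%:R * expR (t * d%:R / 2) <= \sum_(a in A) expR (t * hh lam a).
  apply: le_trans j; rewrite ler_pM2l // ler_expR -mulr_sumr.
  rewrite ler_pdivlMr //.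
  have := ler_wpM2l (ltW t0) sA => h; apply: (le_trans _ h).
  lra.
have c : \sum_(a in A) expR (t * hh lam a) <= \sum_x expR (t * hh lam x).
  rewrite [X in _ <= X](bigID (fun x => x \in A)) /= lerDl sumr_ge0 // => x _.
have sQ : \sum_x Q lam x = #|G|%:R.
  apply: complex.complexI; rewrite rmorph_sum /= riesz //.
  by rewrite rmorph_nat.
have de : \sum_x expR (t * hh lam x) <= (5/4) ^+ d * #|G|%:R.
  rewrite -sQ mulr_sumr; apply: ler_sum => x _; exact: exp_Q.
have f := le_trans b (le_trans c de).
have f' := f; rewrite -ler_ln ?posrE ?mulr_gt0 ?expR_gt0 ?exprn_gt0 // in f'.
rewrite !lnM ?posrE ?expR_gt0 ?exprn_gt0 // expRK lnXn // in f'.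
rewrite mulrBr; move: f'; rewrite -/t -mulr_natl.
set L5 := ln (5 / 4 : RR); set LA := ln (#|A|%:R : RR); set LG := ln (#|G|%:R : RR).
rewrite -[L5 *+ d]mulr_natl => f'.
have -> : d%:R * (t / 2) = t * d%:R / 2 by ring.
lra.
Qed.
End Chang.

Unset Implicit Arguments. Set Strict Implicit.

Lemma ReMr (r : RR) (z : CC) : complex.Re ((r%:C)%C * z) = r * complex.Re z.
Proof. by case: z => p q /=; ring. Qed.

Lemma Re_conj (z : CC) : complex.Re (z^*) = complex.Re z.
Proof. by case: z. Qed.

Lemma ReIm1 (z : CC) : `|z| = 1 -> complex.Re z ^+ 2 + complex.Im z ^+ 2 = 1.
Proof.
move=> h; apply: complex.complexI; rewrite complex.add_Re2_Im2 h expr1n.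
by rewrite rmorph1.
Qed.

Lemma Re_ge_m1 (z : CC) : `|z| = 1 -> -1 <= complex.Re z.
Proof. move/ReIm1 => e; nra. Qed.

Lemma Re_ge0_near (z : CC) : `|z| = 1 -> `|z - 1| <= 1 -> 0 <= complex.Re z.
Proof.
move=> /ReIm1 e h.
have h2 : `|z - 1| ^+ 2 <= 1 by rewrite exprn_ile1.
have {}h2 : (complex.Re (z-1))^+2 + (complex.Im (z-1))^+2 <= 1.
  by rewrite -complex.lecR complex.add_Re2_Im2 rmorph1.
have eI : complex.Im (z - 1) = complex.Im z by case: (z) => p q /=; ring.
have eR : complex.Re (z - 1) = complex.Re z - 1 by case: (z) => p q /=; ring.
rewrite eI eR in h2; nra.
Qed.

Theorem lemmaB14 :
  exists c C : RR, 0 < c /\ 0 < C /\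
    forall (G : finZmodType) (A : {set G}), A != set0 ->
      let alpha : RR := (#|A|%:R / #|G|%:R) in
      exists (S : seq (G -> CC)) (rho : RR) (k : nat),
        (forall gamma, List.In gamma S -> is_character gamma) /\
        (size S)%:R <= C * ln (2 / alpha) /\
        c / ln (2 / alpha) <= rho /\
        (0 < k)%N /\ k%:R <= C * ln (2 / alpha) /\
        (forall x : G, bohr S rho x -> iter_diff k A x).
Proof.
set kap : RR := ln (2:RR) / 2 - ln (5/4).
have l2 : 0 < ln (2:RR) by rewrite ln_gt0 // ltr1n.
have kap0 : 0 < kap.
  have : ln ((5/4 : RR) ^+ 2) < ln 2.
    by rewrite ltr_ln ?posrE ?exprn_gt0 //; lra.
  rewrite lnXn; last by lra.
  rewrite /kap mulr2n; lra.
exists kap, (kap^-1 + 2 / ln 2); split => //; split.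
  by rewrite addr_gt0 ?invr_gt0 ?divr_gt0.
move=> G A hA alpha.
set n := #|G|; set a := #|A|.
have a0 : (0 < a)%N by rewrite /a card_gt0.
have an : (a <= n)%N by rewrite /a /n max_card.
have aR : (0 : RR) < a%:R by rewrite ltr0n.
have nR : (0 : RR) < n%:R by rewrite ltr0n (leq_trans a0 an).
have anR : (a%:R : RR) <= n%:R by rewrite ler_nat.
set L := ln (2 / alpha).
have LE : L = ln 2 + ln (n%:R : RR) - ln (a%:R : RR).
  rewrite /L /alpha ln_div ?posrE ?divr_gt0 // ln_div ?posrE //; ring.
have nlA : ln (a%:R : RR) <= ln (n%:R : RR) by rewrite ler_ln ?posrE.
have L2 : ln 2 <= L by rewrite LE; lra.
have L0 : 0 < L by lra.
have [w pw] := CC_prim_root (ltn0Sn (Zp_trunc #|G|).+1).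
pose sp := [seq f <- enum {ffun G -> 'I_(Zp_trunc #|G|).+2} |
             ishom f && (a%:R <= 2 * `|Fh G w A f|)].
have spc : forall f, f \in sp -> is_character (chr w f).
  by move=> f; rewrite mem_filter => /andP[/andP[hf _] _]; apply: (chr_char pw hf).
have [lam [sub [dis insp]]] := greedy spc.
set S := map (chr w) lam.
have inS : forall l, List.In l S -> exists2 f, l = chr w f & f \in sp.
  by move=> l /List.in_map_iff [f [<- hf]]; exists f => //; apply/sub/InP.
have allS : allch S by move=> l /inS [f -> /spc].
have spS : forall l, List.In l S -> a%:R <= 2 * `|FA A l|.
  by move=> l /inS [f -> ]; rewrite mem_filter => /andP[/andP[_ h] _].
have ch := chang allS dis a0 spS.
set d := size S in ch.
have dL : d%:R * kap <= L by move: ch; rewrite -/kap LE => ch; lra.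
set j := (trunc_log 2 (n %/ a)).+1.
exists S, (kap / L), j.+1.
split; first by move=> l /inS [f -> /spc].
split.
  rewrite mulrDl -/d; apply: le_trans (_ : kap^-1 * L <= _).
    by rewrite mulrC ler_pdivlMr.
  by rewrite lerDl mulr_ge0 // ?divr_ge0 // ltW.
split => //.
split => //.
split.
  have q0 : (0 < n %/ a)%N by rewrite divn_gt0.
  set tl := trunc_log 2 (n %/ a) in j *.
  have tlP : (2 ^ tl <= n %/ a)%N := trunc_logP (isT : (1 < 2)%N) q0.
  have qa : ((n %/ a) * a <= n)%N := leq_trunc_div n a.
  have qR : (0 : RR) < (n %/ a)%:R by rewrite ltr0n.
  have h1 : tl%:R * ln (2:RR) <= ln ((n %/ a)%:R : RR).
    by rewrite mulr_natl -lnXn // -natrX ler_ln ?posrE ?ltr0n ?expn_gt0 // ler_nat.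
  have h2 : ln ((n %/ a)%:R : RR) <= ln (n%:R : RR) - ln (a%:R : RR).
    rewrite -ln_div ?posrE // ler_ln ?posrE ?divr_gt0 // ler_pdivlMr //.
    by rewrite -natrM ler_nat.
  have kb : (tl%:R + 2) * ln (2:RR) <= 2 * L.
    rewrite LE; lra.
  apply: le_trans (_ : 2 * L / ln 2 <= _).
    by rewrite ler_pdivlMr // /j -addn2 natrD.
  have -> : (kap^-1 + 2 / ln 2) * L = 2 * L / ln 2 + kap^-1 * L by rewrite mulrDl addrC mulrAC.
  by rewrite lerDl mulr_ge0 // ?invr_ge0 ltW.
move=> x hb; apply: NNPP => nrep.
have Z := rep_zero G w pw A j.+1 x nrep.
set k := j.+1 in Z.
pose Nf f : RR := complex.Re `|Fh G w A f|.
have NfE f : `|Fh G w A f| = (Nf f)%:C%C by rewrite realn.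
have Nf0 f : 0 <= Nf f.
  by rewrite -complex.lecR -NfE rmorph0.
pose V f : RR := (Nf f ^+ k) ^+ 2.
have VE f : Fh G w A f ^+ k * (Fh G w A f ^+ k)^* = (V f)%:C%C.
  by rewrite -normCK normrX NfE /V !rmorphXn.
pose T f := V f * complex.Re (chr w f x).
have Tsum : \sum_(f | ishom f) T f = 0.
  rewrite -[RHS](_ : complex.Re (0 : CC) = 0) // -Z raddf_sum /=.
  by apply: eq_bigr => f _; rewrite VE ReMr Re_conj.
have Psum : \sum_(f | ishom f) Nf f ^+ 2 = (n * a)%:R.
  apply: complex.complexI; rewrite rmorph_sum /= rmorph_nat -(parseval G w pw A).
  by apply: eq_bigr => f _; rewrite rmorphXn /= -NfE normCK.
pose f0 : {ffun G -> 'I_(Zp_trunc #|G|).+2} := 0.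
have f0h : ishom f0 by apply/ishomP => u v; rewrite !ffunE addr0.
have chr0 y : chr w f0 y = 1 by rewrite /chr ffunE expr0.
have Nf0a : Nf f0 = a%:R.
  rewrite /Nf /Fh (eq_bigr (fun _ => 1)) ?sumr_const; last by move=> y _; rewrite chr0.
  by rewrite normr_nat -(rmorph_nat (real_complex RR)).
have natC (m : nat) : (m%:R : CC) = (m%:R : RR)%:C%C by rewrite rmorph_nat.
have inspE f : ishom f -> (f \in sp) = (a%:R <= 2 * Nf f).
  move=> hf; rewrite mem_filter mem_enum hf andbT /=.
  by rewrite NfE natC (natC 2) -rmorphM complex.lecR.
have dkL : d%:R * (kap / L) <= 1 by rewrite mulrA ler_pdivrMr // mul1r.
have near f : f \in sp -> 0 <= complex.Re (chr w f x).
  move=> fsp; have hf : ishom f by move: fsp; rewrite mem_filter => /andP[/andP[]].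
  apply: Re_ge0_near; first exact: (chr_char pw hf).1.
  have [e [se he]] := insp f fsp.
  rewrite he; apply: le_trans (psi_near e allS hb) _.
  by rewrite natC -rmorphM -(rmorph1 (real_complex RR)) complex.lecR.
set X : RR := ((a%:R / 2) ^+ 2) ^+ j.
have X0 : 0 <= X by rewrite exprn_ge0 // sqr_ge0.
have VE2 f : V f = (Nf f ^+ 2) ^+ j * Nf f ^+ 2.
  by rewrite /V /k -exprM mulnC exprM exprSr.
have gpos f : ishom f -> 0 <= T f + X * Nf f ^+ 2.
  move=> hf; case: (boolP (f \in sp)) => fsp.
    apply: addr_ge0; last by apply: mulr_ge0 => //; exact: sqr_ge0.
    by apply: mulr_ge0; [exact: sqr_ge0 | exact: near].
  rewrite inspE // -ltNge in fsp.
  have hR : -1 <= complex.Re (chr w f x) by apply: Re_ge_m1; exact: (chr_char pw hf).1.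
  have V0 : 0 <= V f by rewrite /V sqr_ge0.
  have hT : - V f <= T f by rewrite /T -mulrN1 ler_wpM2l.
  have hN : Nf f ^+ 2 <= (a%:R / 2) ^+ 2.
    by apply: lerXn2r; rewrite ?nnegrE; [exact: Nf0 | lra | lra].
  have hV : V f <= X * Nf f ^+ 2.
    rewrite VE2 ler_wpM2r ?sqr_ge0 // /X.
    by apply: lerXn2r; rewrite ?nnegrE ?sqr_ge0.
  lra.
have S1 : T f0 + X * Nf f0 ^+ 2 <= X * (n * a)%:R.
  have S0 : \sum_(f | ishom f) (T f + X * Nf f ^+ 2) = X * (n * a)%:R.
    by rewrite big_split /= Tsum add0r -mulr_sumr Psum.
  rewrite -S0 (bigD1 f0) //= lerDl sumr_ge0 // => f /andP[hf _]; exact: gpos.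
have T0 : T f0 = (a%:R ^+ 2) ^+ j * a%:R ^+ 2.
  by rewrite /T chr0 -(rmorph1 (real_complex RR)) /= mulr1 VE2 Nf0a.
have S2 : (a%:R ^+ 2) ^+ j * a%:R ^+ 2 <= X * (n * a)%:R.
  apply: le_trans S1; rewrite T0 lerDl mulr_ge0 ?sqr_ge0 //.
have nat1 : (n < 4 ^ j * a)%N.
  have q1 : (n %/ a < 2 ^ j)%N by apply: trunc_log_ltn.
  have h1 : (n < (n %/ a).+1 * a)%N.
    by rewrite {1}(divn_eq n a) mulSn addnC ltn_add2r ltn_pmod.
  apply: (leq_trans h1); rewrite leq_mul2r; apply/orP; right.
  by apply: (leq_trans q1); rewrite leq_exp2r.
have P0 : (0 : RR) < (a%:R ^+ 2) ^+ j by rewrite exprn_gt0 // exprn_gt0.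
have D0 : (0 : RR) < 4 ^+ j by rewrite exprn_gt0.
have XE : X = (a%:R ^+ 2) ^+ j / 4 ^+ j.
  by rewrite /X expr_div_n expr_div_n; congr (_ / _ ^+ _); rewrite expr2 -natrM.
rewrite XE -mulrA ler_pM2l // [_^-1 * _]mulrC ler_pdivlMr // natrM in S2.
have S3 : (a%:R * 4 ^+ j) * a%:R <= (n%:R : RR) * a%:R.
  by apply: le_trans S2; rewrite le_eqVlt; apply/orP; left; apply/eqP; ring.
rewrite ler_pM2r // in S3.
have : (n%:R : RR) < (4 ^ j * a)%:R by rewrite ltr_nat.
rewrite natrM natrX; lra.
Qed.
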